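(* Let $a_0,a_1,\dots,a_k\ge 0$, $\delta>1$ and $m>0$ be real numbers, and let $r=m^{-1/(\delta-1)}$. If $s=\sum_{i=0}^k a_i\ge 1$ and $a_i\le rs$ for all $1\le i\le k$, then $$m\big(a_0+c a_1^\delta+\dots+c a_k^\delta\big)\le c s^\delta$$ for every $c\ge m$. *)

(* Defs.v *)
From mathcomp Require Import all_boot all_order all_algebra.
From mathcomp Require Import all_classical all_reals all_analysis.

(* Main.v *)
Require Import Defs.
From mathcomp Require Import all_boot all_order all_algebra.
From mathcomp Require Import all_classical all_reals all_analysis.
From mathcomp Require Import ring.
Import Order.TTheory GRing.Theory Num.Theory.
Local Open Scope ring_scope.

Theorem lemma2p6 (R : realType) (k : nat) (a : nat -> R) (delta m : R)
  (ha : forall i, (i <= k)%N -> 0 <= a i)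
  (hdelta : 1 < delta) (hm : 0 < m)
  (hs : 1 <= \sum_(0 <= i < k.+1) a i)
  (hr : forall i, (1 <= i <= k)%N ->
     a i <= m `^ (- (delta - 1)^-1) * \sum_(0 <= i < k.+1) a i) :
  forall c : R, m <= c ->
    m * (a 0%N + \sum_(1 <= i < k.+1) c * a i `^ delta)
      <= c * (\sum_(0 <= i < k.+1) a i) `^ delta.
Proof.
move=> c hc.
set s := \sum_(0 <= i < k.+1) a i in hs hr *.
have s0 : 0 <= s by apply: le_trans hs.
have e0 : 0 < delta - 1 by rewrite subr_gt0.
have d0 : 0 < delta by apply: lt_trans hdelta.
have c0 : 0 < c by apply: lt_le_trans hc.
have se1 : 1 <= s `^ (delta - 1).
  rewrite -{1}(powRr0 s); apply: (ler_powR hs); exact: ltW.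
have hm0 : 0 <= m `^ (- (delta - 1)^-1) by apply: powR_ge0.
have re : (m `^ (- (delta - 1)^-1)) `^ (delta - 1) = m^-1.
  rewrite -powRrM mulNr mulVf ?gt_eqF // powR_inv1 //; exact: ltW.
have key : forall i, (1 <= i <= k)%N ->
    m * (c * a i `^ delta) <= c * a i * s `^ (delta - 1).
  move=> i hi; have ai : 0 <= a i by apply: ha; case/andP: hi.
  have h : m * a i `^ (delta - 1) <= s `^ (delta - 1).
    have : a i `^ (delta - 1) <= (m `^ (- (delta - 1)^-1) * s) `^ (delta - 1).
      apply: ge0_ler_powR; [exact: ltW | by rewrite nnegrE | by rewrite nnegrE mulr_ge0 | exact: hr hi].
    rewrite powRM // re => h.
    by rewrite -(ler_pM2l hm) mulrA mulfV ?gt_eqF // mul1r in h.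
  rewrite -(mulr_powRB1 ai d0).
  have -> : m * (c * (a i * a i `^ (delta - 1))) = c * a i * (m * a i `^ (delta - 1)) by ring.
  by apply: ler_wpM2l => //; apply: mulr_ge0 => //; exact: ltW.
have -> : c * s `^ delta = c * a 0%N * s `^ (delta - 1)
    + \sum_(1 <= i < k.+1) c * a i * s `^ (delta - 1).
  rewrite -(mulr_powRB1 s0 d0) {1}/s big_ltn //= mulrDl mulrDr mulrA.
  congr (_ + _); rewrite big_distrl big_distrr; apply: eq_bigr => i _.
  exact: mulrA.
rewrite mulrDr big_distrr /=.
apply: lerD.
  have a00 : 0 <= a 0%N by apply: ha.
  apply: (@le_trans _ _ (c * a 0%N)); first by apply: ler_wpM2r.
  rewrite -{1}[c * a 0%N]mulr1; apply: ler_wpM2l => //; exact: mulr_ge0 (ltW c0) a00.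
apply: ler_sum_nat => i /andP[h1 h2]; apply: key; rewrite h1 /=; exact: h2.
Qed.
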